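(* There is a uniform constant $M>0$ such that for every $n\ge1$, every admissible $\boldsymbol\alpha=(\alpha_1,\dots,\alpha_n)$ with inverse branch $h_{\boldsymbol\alpha}=h_{\alpha_1}\circ\dots\circ h_{\alpha_n}$, every unit tangent vector $v$ and every $z\in T^nO_{\boldsymbol\alpha}$, $$|\partial_vJ_{\boldsymbol\alpha}(z)|\le M|J_{\boldsymbol\alpha}(z)|,$$ where $\partial_v$ denotes the directional derivative.
   Context: Fix $d\in\{1,2,3,7,11\}$, $\mathcal O$ the ring of integers of $\mathbb Q(\sqrt{-d})$ ($\mathbb Z[\sqrt{-d}]$ if $d\not\equiv3\bmod4$, $\mathbb Z[\frac{1+\sqrt{-d}}2]$ if $d\equiv3\bmod4$). $I\subset\mathbb C$ is $\{x+iy:|x|\le1/2,|y|\le\sqrt d/2\}$ if $d=1,2$ and $\{x+iy:|x|\le1/2,|y\pm x/\sqrt d|\le\frac{d+1}{4\sqrt d}\}$ if $d=3,7,11$; $I'=I\setminus\bigcup_\beta(I+\beta)$, $\beta\in\{1,\sqrt{-d}\}$ ($d=1,2$) or $\{1,\frac{1\pm\sqrt{-d}}2\}$ ($d=3,7,11$); $[z]\in\mathcal O$ is the unique element with $z-[z]\in I'$. $T(z)=1/z-[1/z]$ ($z\ne0$), $T(0)=0$; digits $\alpha_j(z)=[1/T^{j-1}(z)]$. For $\alpha\in\mathcal O$, $O_\alpha=\{z\in I\setminus\{0\}:[1/z]=\alpha\}$, and for non-empty $O_\alpha$, $h_\alpha:TO_\alpha\to O_\alpha$, $h_\alpha(z)=1/(z+\alpha)$.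 For $\boldsymbol\alpha\in\mathcal O^n$, $O_{\boldsymbol\alpha}=\{z\in I:\alpha_j(z)=\alpha_j,\ j\le n\}$; $\boldsymbol\alpha$ is admissible if $O_{\boldsymbol\alpha}\ne\emptyset$, and then $h_{\boldsymbol\alpha}:T^nO_{\boldsymbol\alpha}\to O_{\boldsymbol\alpha}$. $J_{\boldsymbol\alpha}$ is the Jacobian determinant of $h_{\boldsymbol\alpha}$ viewed as a map of $\mathbb R^2$, i.e. $J_{\boldsymbol\alpha}(z)=|h_{\boldsymbol\alpha}'(z)|^2$. *)

(* Defs.v *)
From Stdlib Require Import Reals Lra List ClassicalEpsilon ClassicalDescription.
From Coquelicot Require Import Coquelicot.
Open Scope R_scope.

(* d is one of 1,2,3,7,11; the case d = 3 mod 4 uses Z[(1+sqrt(-d))/2]. *)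
Definition d3 (d : nat) : bool := Nat.eqb (Nat.modulo d 4) 3.

Definition inO (d : nat) (w : C) : Prop :=
  exists a b : Z,
    if d3 d then w = (IZR a + IZR b / 2, IZR b * sqrt (INR d) / 2)
    else w = (IZR a, IZR b * sqrt (INR d)).

Definition inI (d : nat) (w : C) : Prop :=
  let x := fst w in let y := snd w in
  if d3 d then
    Rabs x <= 1/2 /\
    Rabs (y + x / sqrt (INR d)) <= (INR d + 1) / (4 * sqrt (INR d)) /\
    Rabs (y - x / sqrt (INR d)) <= (INR d + 1) / (4 * sqrt (INR d))
  else Rabs x <= 1/2 /\ Rabs y <= sqrt (INR d) / 2.

Definition betas (d : nat) : list C :=
  if d3 d then (1, 0) :: (1/2, sqrt (INR d) / 2) :: (1/2, - (sqrt (INR d) / 2)) :: nil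
  else (1, 0) :: (0, sqrt (INR d)) :: nil.

Definition inI' (d : nat) (w : C) : Prop :=
  inI d w /\ forall b, In b (betas d) -> ~ inI d (Cminus w b).

Definition floorO (d : nat) (z : C) : C :=
  epsilon (inhabits (RtoC 0)) (fun a => inO d a /\ inI' d (Cminus z a)).

Definition Tmap (d : nat) (z : C) : C :=
  if excluded_middle_informative (z = RtoC 0) then RtoC 0
  else Cminus (Cinv z) (floorO d (Cinv z)).

Definition digit (d : nat) (j : nat) (z : C) : C :=
  floorO d (Cinv (Nat.iter (j - 1) (Tmap d) z)).

Definition inOalpha (d : nat) (al : list C) (z : C) : Prop :=
  inI d z /\
  forall j, (1 <= j <= length al)%nat ->
    Nat.iter (j - 1) (Tmap d) z <> RtoC 0 /\
    digit d j z = nth (j - 1) al (RtoC 0).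

Definition admissible (d : nat) (al : list C) : Prop :=
  exists z, inOalpha d al z.

Definition inTnOalpha (d : nat) (al : list C) (z : C) : Prop :=
  exists w, inOalpha d al w /\ Nat.iter (length al) (Tmap d) w = z.

Definition hbranch (al : list C) (z : C) : C :=
  fold_right (fun a w => Cinv (Cplus w a)) z al.

Definition jacobian (f : C -> C) (z : C) : R :=
  let ux := Derive (fun t => fst (f (t, snd z))) (fst z) in
  let uy := Derive (fun t => fst (f (fst z, t))) (snd z) in
  let vx := Derive (fun t => snd (f (t, snd z))) (fst z) in
  let vy := Derive (fun t => snd (f (fst z, t))) (snd z) in
  ux * vy - uy * vx.

Definition Jalpha (al : list C) (z : C) : R := jacobian (hbranch al) z.

Definition along (J : C -> R) (z v : C) (t : R) : R :=
  J (fst z + t * fst v, snd z + t * snd v).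

(* Main.v *)
Require Import Defs.
From Stdlib Require Import Reals List Lra Psatz Lia ZArith ClassicalEpsilon.
From Coquelicot Require Import Coquelicot.
Open Scope R_scope.

Definition mobf (A B C0 D : C) (z : C) : C := ((A * z + B) / (C0 * z + D))%C.
Definition dmob (A B C0 D : C) (z : C) : C := ((A * D - B * C0) / ((C0 * z + D) * (C0 * z + D)))%C.

Lemma C_neq0 (w : C) : w <> 0%C -> fst w ^ 2 + snd w ^ 2 <> 0.
Proof.
  intros H. destruct w as [a b]. simpl. intro E. apply H.
  assert (a = 0) by nra. assert (b = 0) by nra. subst. reflexivity.
Qed.

Lemma mob_dx (A B C0 D : C) (x y : R) :
  (C0 * (x, y) + D)%C <> 0%C ->
  is_derive (fun t => fst (mobf A B C0 D (t, y))) x (fst (dmob A B C0 D (x, y))) /\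
  is_derive (fun t => snd (mobf A B C0 D (t, y))) x (snd (dmob A B C0 D (x, y))).
Proof.
  intros H. apply C_neq0 in H.
  destruct A as [a1 a2], B as [b1 b2], C0 as [c1 c2], D as [d1 d2].
  unfold mobf, dmob; simpl in *.
  set (w1 := c1 * x - c2 * y + d1) in *. set (w2 := c1 * y + c2 * x + d2) in *.
  assert (HN : w1 * w1 + w2 * w2 <> 0) by (intro; apply H; nra).
  assert (HN2 : (w1 * w1 - w2 * w2) * (w1 * w1 - w2 * w2) + (w1 * w2 + w2 * w1) * (w1 * w2 + w2 * w1) <> 0).
  { replace ((w1 * w1 - w2 * w2) * (w1 * w1 - w2 * w2) + (w1 * w2 + w2 * w1) * (w1 * w2 + w2 * w1)) with ((w1*w1+w2*w2)*(w1*w1+w2*w2)) by ring.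
    apply Rmult_integral_contrapositive; auto. }
  split; auto_derive.
  all: simpl in *; try (replace (c1 * x + - (c2 * y) + d1) with w1 by (unfold w1; ring)).
  all: repeat split.
  all: try (intro E; apply HN; unfold w1, w2 in *; nra).
  all: unfold w1, w2 in *; field; repeat split; assumption.
Qed.

Lemma mob_dy (A B C0 D : C) (x y : R) :
  (C0 * (x, y) + D)%C <> 0%C ->
  is_derive (fun t => fst (mobf A B C0 D (x, t))) y (- snd (dmob A B C0 D (x, y))) /\
  is_derive (fun t => snd (mobf A B C0 D (x, t))) y (fst (dmob A B C0 D (x, y))).
Proof.
  intros H. apply C_neq0 in H.
  destruct A as [a1 a2], B as [b1 b2], C0 as [c1 c2], D as [d1 d2].
  unfold mobf, dmob; simpl in *.
  set (w1 := c1 * x - c2 * y + d1) in *. set (w2 := c1 * y + c2 * x + d2) in *.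
  assert (HN : w1 * w1 + w2 * w2 <> 0) by (intro; apply H; nra).
  assert (HN2 : (w1 * w1 - w2 * w2) * (w1 * w1 - w2 * w2) + (w1 * w2 + w2 * w1) * (w1 * w2 + w2 * w1) <> 0).
  { replace ((w1 * w1 - w2 * w2) * (w1 * w1 - w2 * w2) + (w1 * w2 + w2 * w1) * (w1 * w2 + w2 * w1)) with ((w1*w1+w2*w2)*(w1*w1+w2*w2)) by ring.
    apply Rmult_integral_contrapositive; auto. }
  split; auto_derive.
  all: simpl in *; try (replace (c1 * x + - (c2 * y) + d1) with w1 by (unfold w1; ring)).
  all: repeat split.
  all: try (intro E; apply HN; unfold w1, w2 in *; nra).
  all: unfold w1, w2 in *; field; repeat split; assumption.
Qed.


Record Mob := mkMob { mA : C; mB : C; mC : C; mD : C }.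

Fixpoint mob (al : list C) : Mob :=
  match al with
  | nil => mkMob 1%C 0%C 0%C 1%C
  | a :: al' => let m := mob al' in
      mkMob (mC m) (mD m) (mA m + a * mC m)%C (mB m + a * mD m)%C
  end.

Definition den (al : list C) (z : C) : C := (mC (mob al) * z + mD (mob al))%C.

Fixpoint good (al : list C) (z : C) : Prop :=
  match al with
  | nil => True
  | a :: al' => good al' z /\ den (a :: al') z <> 0%C
  end.

Lemma good_den al z : good al z -> den al z <> 0%C.
Proof.
  destruct al as [|a al]; simpl.
  - intros _. unfold den; simpl. intro E.
    assert (E' : (0 * z + 1)%C = 1%C) by ring. rewrite E' in E.
    injection E; intros; lra.
  - tauto.
Qed.

Lemma hb_mob al z : good al z ->
  hbranch al z = mobf (mA (mob al)) (mB (mob al)) (mC (mob al)) (mD (mob al)) z.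
Proof.
  induction al as [|a al IH]; simpl; intros H.
  - unfold mobf. field.
  - destruct H as [H1 H2]. rewrite (IH H1). pose proof (good_den _ _ H1) as H3.
    unfold den in *; simpl in *. unfold mobf.
    set (A := mA (mob al)) in *. set (B := mB (mob al)) in *.
    set (C0 := mC (mob al)) in *. set (D := mD (mob al)) in *.
    assert (E : ((A * z + B) / (C0 * z + D) + a)%C =
                (((A + a * C0) * z + (B + a * D)) / (C0 * z + D))%C) by (field; auto).
    rewrite E. field. split; auto.
Qed.

Lemma det_mob al :
  (mA (mob al) * mD (mob al) - mB (mob al) * mC (mob al))%C = 1%C \/
  (mA (mob al) * mD (mob al) - mB (mob al) * mC (mob al))%C = (- 1)%C.
Proof.
  induction al as [|a al IH]; simpl.
  - left. ring.
  - assert (E : (mC (mob al) * (mB (mob al) + a * mD (mob al)) -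
                 mD (mob al) * (mA (mob al) + a * mC (mob al)))%C =
                (- (mA (mob al) * mD (mob al) - mB (mob al) * mC (mob al)))%C) by ring.
    rewrite E. destruct IH as [IH|IH]; rewrite IH; [right|left]; ring.
Qed.

Lemma pt_eq (z v : C) (t : R) :
  (fst z + t * fst v, snd z + t * snd v) = (z + RtoC t * v)%C.
Proof.
  destruct z as [z1 z2], v as [v1 v2]. unfold Cplus, Cmult, RtoC; simpl. f_equal; ring.
Qed.

Lemma nz_near (W q : C) : W <> 0%C ->
  exists e, 0 < e /\ forall t, Rabs t < e -> (W + RtoC t * q)%C <> 0%C.
Proof.
  intros HW. apply Cmod_gt_0 in HW.
  pose proof (Cmod_ge_0 q) as Hq.
  exists (Cmod W / (Cmod q + 1)). split.
  - apply Rdiv_lt_0_compat; lra.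
  - intros t Ht E.
    assert (T : Cmod W <= Cmod (W + RtoC t * q)%C + Cmod (- (RtoC t * q))%C).
    { replace W with ((W + RtoC t * q) + (- (RtoC t * q)))%C at 1 by ring.
      apply Cmod_triangle. }
    rewrite E, Cmod_0, Cmod_opp, Cmod_mult, Cmod_R in T.
    pose proof (Rabs_pos t).
    assert (Rabs t * (Cmod q + 1) < Cmod W).
    { apply Rmult_lt_compat_r with (r := Cmod q + 1) in Ht; [|lra].
      unfold Rdiv in Ht. rewrite Rmult_assoc, Rinv_l in Ht; lra. }
    nra.
Qed.

Lemma den_shift al z t v :
  den al (z + RtoC t * v)%C = (den al z + RtoC t * (mC (mob al) * v))%C.
Proof. unfold den. ring. Qed.

Lemma good_open al z v : good al z ->
  exists e, 0 < e /\ forall t, Rabs t < e -> good al (z + RtoC t * v)%C.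
Proof.
  induction al as [|a al IH]; simpl; intros H.
  - exists 1. split; [lra|]. auto.
  - destruct H as [H1 H2]. destruct (IH H1) as [e1 [He1 G1]].
    destruct (nz_near _ (mC (mob (a :: al)) * v)%C H2) as [e2 [He2 G2]].
    exists (Rmin e1 e2). split; [apply Rmin_pos; auto|].
    intros t Ht. split.
    + apply G1. eapply Rlt_le_trans; [apply Ht| apply Rmin_l].
    + rewrite den_shift. apply G2. eapply Rlt_le_trans; [apply Ht| apply Rmin_r].
Qed.

Lemma locally_of (x e : R) (P : R -> Prop) : 0 < e ->
  (forall t, Rabs (t - x) < e -> P t) -> locally x P.
Proof.
  intros He H. exists (mkposreal e He). intros y Hy. apply H.
  exact Hy.
Qed.


Lemma inv_sq_formula (s W : C) : (s = 1%C \/ s = (-1)%C) -> W <> 0%C ->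
  fst (s / (W * W))%C * fst (s / (W * W))%C - (- snd (s / (W * W))%C) * snd (s / (W * W))%C
  = / ((fst W ^ 2 + snd W ^ 2) ^ 2).
Proof.
  intros Hs HW. apply C_neq0 in HW. destruct W as [w1 w2]. simpl in HW.
  assert (HW2 : (w1 * w1 - w2 * w2) * (w1 * w1 - w2 * w2) + (w1 * w2 + w2 * w1) * (w1 * w2 + w2 * w1) <> 0).
  { replace ((w1 * w1 - w2 * w2) * (w1 * w1 - w2 * w2) + (w1 * w2 + w2 * w1) * (w1 * w2 + w2 * w1))
      with ((w1 ^ 2 + w2 ^ 2) * (w1 ^ 2 + w2 ^ 2)) by ring.
    apply Rmult_integral_contrapositive; auto. }
  destruct Hs as [Hs|Hs]; subst s; unfold Cdiv, Cmult, Cinv, Copp, RtoC; simpl;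
  field; repeat split; auto; intro E; apply HW2; nra.
Qed.

Lemma jac_mob al z : good al z ->
  jacobian (hbranch al) z = / ((fst (den al z) ^ 2 + snd (den al z) ^ 2) ^ 2).
Proof.
  intros Hg. destruct z as [x y].
  pose proof (good_den _ _ Hg) as Hd.
  destruct (good_open al (x, y) (1, 0)%R Hg) as [e1 [He1 G1]].
  destruct (good_open al (x, y) (0, 1)%R Hg) as [e2 [He2 G2]].
  set (A := mA (mob al)) in *. set (B := mB (mob al)) in *.
  set (C0 := mC (mob al)) in *. set (D := mD (mob al)) in *.
  assert (LH : locally x (fun t => mobf A B C0 D (t, y) = hbranch al (t, y))).
  { apply (locally_of x e1); auto. intros t Ht.
    specialize (G1 (t - x) Ht). rewrite <- pt_eq in G1. simpl in G1.
    replace (x + (t - x) * 1, y + (t - x) * 0) with (t, y) in G1 by (f_equal; ring).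
    exact (eq_sym (hb_mob _ _ G1)). }
  assert (LV : locally y (fun t => mobf A B C0 D (x, t) = hbranch al (x, t))).
  { apply (locally_of y e2); auto. intros t Ht.
    specialize (G2 (t - y) Ht). rewrite <- pt_eq in G2. simpl in G2.
    replace (x + (t - y) * 0, y + (t - y) * 1) with (x, t) in G2 by (f_equal; ring).
    exact (eq_sym (hb_mob _ _ G2)). }
  unfold den in Hd. fold C0 D in Hd.
  destruct (mob_dx A B C0 D x y Hd) as [DX1 DX2].
  destruct (mob_dy A B C0 D x y Hd) as [DY1 DY2].
  unfold jacobian; simpl.
  rewrite (is_derive_unique _ _ _ (is_derive_ext_loc _ _ _ _
            (filter_imp _ _ (fun t (h : mobf A B C0 D (t, y) = hbranch al (t, y)) => f_equal fst h) LH) DX1)).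
  rewrite (is_derive_unique _ _ _ (is_derive_ext_loc _ _ _ _
            (filter_imp _ _ (fun t (h : mobf A B C0 D (t, y) = hbranch al (t, y)) => f_equal snd h) LH) DX2)).
  rewrite (is_derive_unique _ _ _ (is_derive_ext_loc _ _ _ _
            (filter_imp _ _ (fun t (h : mobf A B C0 D (x, t) = hbranch al (x, t)) => f_equal fst h) LV) DY1)).
  rewrite (is_derive_unique _ _ _ (is_derive_ext_loc _ _ _ _
            (filter_imp _ _ (fun t (h : mobf A B C0 D (x, t) = hbranch al (x, t)) => f_equal snd h) LV) DY2)).
  unfold dmob, den. fold A B C0 D.
  apply inv_sq_formula; auto. apply det_mob.
Qed.


Lemma g_deriv (w1 w2 q1 q2 : R) : w1 ^ 2 + w2 ^ 2 <> 0 ->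
  is_derive (fun t => / (((w1 + t * q1) ^ 2 + (w2 + t * q2) ^ 2) ^ 2)) 0
    (-4 * (w1 * q1 + w2 * q2) * / ((w1 ^ 2 + w2 ^ 2) ^ 3)).
Proof.
  intros H. assert (P : 0 < w1 ^ 2 + w2 ^ 2).
  { pose proof (pow2_ge_0 w1); pose proof (pow2_ge_0 w2). lra. }
  auto_derive.
  - replace (w1 + 0 * q1) with w1 by ring. replace (w2 + 0 * q2) with w2 by ring.
    intro E. assert (E2 : (w1 ^ 2 + w2 ^ 2) * (w1 ^ 2 + w2 ^ 2) = 0) by (rewrite <- E; ring). nra.
  - replace (w1 + 0 * q1) with w1 by ring. replace (w2 + 0 * q2) with w2 by ring.
    field. auto.
Qed.

Lemma bound_aux (S N K : R) : 0 < N -> 0 <= K -> S ^ 2 <= (K * N) ^ 2 ->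
  Rabs (-4 * S * / (N ^ 3)) <= 4 * K * Rabs (/ (N ^ 2)).
Proof.
  intros HN HK HS.
  assert (HA : Rabs S <= K * N).
  { rewrite <- (Rabs_pos_eq (K * N)) by nra. apply Rsqr_le_abs_0. unfold Rsqr. nra. }
  assert (P3 : 0 < / N ^ 3) by (apply Rinv_0_lt_compat; apply pow_lt; auto).
  rewrite (Rabs_pos_eq (/ N ^ 2)) by (left; apply Rinv_0_lt_compat; apply pow_lt; auto).
  replace (4 * K * / N ^ 2) with (4 * (K * N) * / N ^ 3) by (field; lra).
  rewrite Rabs_mult, (Rabs_pos_eq (/ N ^ 3)) by lra.
  apply Rmult_le_compat_r; [lra|].
  rewrite Rabs_mult.
  replace (Rabs (-4)) with 4 by (rewrite Rabs_left; lra). lra.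
Qed.

Lemma along_main al z v K : good al z -> fst v ^ 2 + snd v ^ 2 = 1 -> 0 <= K ->
  Cmod (mC (mob al)) <= K * Cmod (den al z) ->
  ex_derive (along (Jalpha al) z v) 0 /\
  Rabs (Derive (along (Jalpha al) z v) 0) <= 4 * K * Rabs (Jalpha al z).
Proof.
  intros Hg Hv HK HC.
  destruct (good_open al z v Hg) as [e [He G]].
  pose proof (good_den _ _ Hg) as Hd.
  set (W := den al z) in *. set (q := (mC (mob al) * v)%C).
  destruct W as [w1 w2] eqn:EW. 
  destruct q as [q1 q2] eqn:Eq.
  assert (HN : w1 ^ 2 + w2 ^ 2 <> 0).
  { pose proof (C_neq0 _ Hd) as X. exact X. }
  assert (LE : locally 0 (fun t => / (((w1 + t * q1) ^ 2 + (w2 + t * q2) ^ 2) ^ 2)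
                                 = along (Jalpha al) z v t)).
  { apply (locally_of 0 e); auto. intros t Ht. rewrite Rminus_0_r in Ht.
    unfold along, Jalpha. rewrite pt_eq. rewrite (jac_mob _ _ (G t Ht)).
    rewrite den_shift. fold W. rewrite EW. fold q. rewrite Eq.
    unfold RtoC, Cplus, Cmult; simpl. apply f_equal. ring. }
  pose proof (is_derive_ext_loc _ _ _ _ LE (g_deriv w1 w2 q1 q2 HN)) as DD.
  split; [eexists; exact DD|].
  rewrite (is_derive_unique _ _ _ DD).
  unfold Jalpha. rewrite (jac_mob _ _ Hg). fold W. rewrite EW. simpl fst; simpl snd.
  apply bound_aux; auto.
  - pose proof (pow2_ge_0 w1); pose proof (pow2_ge_0 w2). lra.
  - (* Cauchy-Schwarz *)
    assert (Hq : q1 ^ 2 + q2 ^ 2 = Cmod (mC (mob al)) ^ 2).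
    { rewrite Cmod2_alt. assert (E2 := Eq). unfold q in E2.
      destruct (mC (mob al)) as [c1 c2]. destruct v as [v1 v2].
      unfold Cmult in E2; simpl in E2. injection E2; intros <- <-. simpl. simpl in Hv. nra. }
    assert (HW : Cmod (w1, w2) ^ 2 = w1 ^ 2 + w2 ^ 2) by (rewrite Cmod2_alt; reflexivity).
    assert (Hc2 : Cmod (mC (mob al)) ^ 2 <= K ^ 2 * Cmod (w1, w2) ^ 2).
    { rewrite <- Rpow_mult_distr. apply pow_incr. split; [apply Cmod_ge_0|]. exact HC. }
    rewrite HW in Hc2. rewrite <- Hq in Hc2.
    assert (CS : (w1 * q1 + w2 * q2) ^ 2 <= (w1 ^ 2 + w2 ^ 2) * (q1 ^ 2 + q2 ^ 2))
      by (pose proof (pow2_ge_0 (w1*q2 - w2*q1)); nra).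
    pose proof (pow2_ge_0 w1); pose proof (pow2_ge_0 w2).
    nra.
Qed.


Fixpoint chain (al : list C) (w z : C) : Prop :=
  match al with
  | nil => z = w
  | a :: al' => w <> 0%C /\ Cmod w <= 19/20 /\ chain al' (Cinv w - a)%C z
  end.

Lemma chain_app al b w z : chain (al ++ b :: nil) w z ->
  exists u, chain al w u /\ u <> 0%C /\ Cmod u <= 19/20 /\ z = (Cinv u - b)%C.
Proof.
  revert w. induction al as [|a al IH]; simpl; intros w H.
  - exists w. tauto.
  - destruct H as [H1 [H2 H3]]. destruct (IH _ H3) as [u [U1 U2]].
    exists u. tauto.
Qed.

Lemma mob_app al b :
  mA (mob (al ++ b :: nil)) = mB (mob al) /\
  mB (mob (al ++ b :: nil)) = (mA (mob al) + b * mB (mob al))%C /\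
  mC (mob (al ++ b :: nil)) = mD (mob al) /\
  mD (mob (al ++ b :: nil)) = (mC (mob al) + b * mD (mob al))%C.
Proof.
  induction al as [|a al IH]; simpl.
  - repeat split; ring.
  - destruct IH as [E1 [E2 [E3 E4]]]. rewrite E1, E2, E3, E4.
    repeat split; ring.
Qed.

Lemma chain_bound al : forall w z, chain al w z ->
  Cmod (mC (mob al)) <= 19 * Cmod (den al z).
Proof.
  induction al as [|b al IH] using rev_ind; intros w z H.
  - simpl. rewrite Cmod_0. pose proof (Cmod_ge_0 (den nil z)). lra.
  - destruct (chain_app _ _ _ _ H) as [u [Hc [Hu0 [Hu Hz]]]].
    specialize (IH _ _ Hc).
    unfold den in *. destruct (mob_app al b) as [_ [_ [E3 E4]]].
    rewrite E3, E4.
    set (C0 := mC (mob al)) in *. set (D := mD (mob al)) in *.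
    assert (EW : ((D * z + (C0 + b * D)) * u)%C = (C0 * u + D)%C).
    { rewrite Hz. field. auto. }
    assert (EM : Cmod (D * z + (C0 + b * D))%C * Cmod u = Cmod (C0 * u + D)%C).
    { rewrite <- Cmod_mult. rewrite EW. reflexivity. }
    set (X := Cmod (D * z + (C0 + b * D))%C) in *.
    pose proof (Cmod_ge_0 (D * z + (C0 + b * D))%C) as HX. fold X in HX.
    pose proof (Cmod_ge_0 u) as Hu1.
    pose proof (Cmod_ge_0 C0) as HC0. pose proof (Cmod_ge_0 D) as HD0.
    destruct (Rle_or_lt (Cmod D) (Cmod C0)) as [L|L].
    + nra.
    + assert (T : Cmod D <= Cmod (C0 * u + D)%C + Cmod (- (C0 * u))%C).
      { replace D with ((C0 * u + D) + (- (C0 * u)))%C at 1 by ring. apply Cmod_triangle. }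
      rewrite Cmod_opp, Cmod_mult in T. nra.
Qed.

Lemma chain_good al : forall w z, chain al w z -> good al z /\ hbranch al z = w.
Proof.
  induction al as [|a al IH]; simpl; intros w z H.
  - auto.
  - destruct H as [H1 [H2 H3]]. destruct (IH _ _ H3) as [G E].
    pose proof (good_den _ _ G) as Hd.
    assert (Hm := hb_mob _ _ G). unfold mobf in Hm.
    assert (Hi : Cinv w <> 0%C).
    { intro E0. apply H1. rewrite <- (Cmult_1_l w). rewrite <- (Cinv_l w H1), E0. ring. }
    assert (Dn : den (a :: al) z = (Cinv w * den al z)%C).
    { unfold den; simpl. 
      assert (Num : (mA (mob al) * z + mB (mob al))%C = ((Cinv w - a) * den al z)%C).
      { rewrite <- E, Hm. unfold den. field. exact Hd. }
      transitivity ((mA (mob al) * z + mB (mob al)) + a * (mC (mob al) * z + mD (mob al)))%C; [ring|].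
      rewrite Num. unfold den. ring. }
    split; [split; auto|].
    + rewrite Dn. intro E0. apply Hd.
      transitivity (w * (Cinv w * den al z))%C; [field; auto|]. rewrite E0. ring.
    + rewrite E. field. split; auto.
      intro X. apply (f_equal fst) in X. destruct a, w. simpl in X. lra.
Qed.


Definition HexI (dd s x y : R) : Prop :=
  Rabs x <= 1/2 /\ Rabs (y + x / s) <= (dd + 1) / (4 * s) /\ Rabs (y - x / s) <= (dd + 1) / (4 * s).

Definition Shex (k a b U V : R) := -1/2 <= U + V/2 < 1/2 /\ -k <= U + V*a < k /\ -k < V*b - U <= k.

Lemma hex3 p r : 0 <= p < 1 -> 0 <= r < 1 ->
  Shex 1 2 1 p r \/ Shex 1 2 1 (p-1) r \/ Shex 1 2 1 p (r-1) \/ Shex 1 2 1 (p-1) (r-1).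
Proof. intros. unfold Shex. lra. Qed.
Lemma hex7 p r : 0 <= p < 1 -> 0 <= r < 1 ->
  Shex 2 4 3 p r \/ Shex 2 4 3 (p-1) r \/ Shex 2 4 3 p (r-1) \/ Shex 2 4 3 (p-1) (r-1).
Proof. intros. unfold Shex. lra. Qed.
Lemma hex11 p r : 0 <= p < 1 -> 0 <= r < 1 ->
  Shex 3 6 5 p r \/ Shex 3 6 5 (p-1) r \/ Shex 3 6 5 p (r-1) \/ Shex 3 6 5 (p-1) (r-1).
Proof. intros. unfold Shex. lra. Qed.

Lemma up_floor r : exists m : Z, IZR m <= r < IZR m + 1.
Proof.
  exists (up r - 1)%Z. rewrite minus_IZR. destruct (archimed r). simpl. lra.
Qed.

Lemma rabs_div_le P K s : 0 < s -> -K <= P <= K -> Rabs (P / s) <= K / s.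
Proof.
  intros Hs HP. unfold Rdiv. rewrite Rabs_mult, (Rabs_pos_eq (/ s)) by (left; apply Rinv_0_lt_compat; auto).
  apply Rmult_le_compat_r; [left; apply Rinv_0_lt_compat; auto|]. apply Rabs_le. lra.
Qed.

Lemma rabs_div_gt P K s : 0 < s -> (K < P \/ P < -K) -> K / s < Rabs (P / s).
Proof.
  intros Hs HP. unfold Rdiv. rewrite Rabs_mult, (Rabs_pos_eq (/ s)) by (left; apply Rinv_0_lt_compat; auto).
  apply Rmult_lt_compat_r; [apply Rinv_0_lt_compat; auto|].
  unfold Rabs; destruct (Rcase_abs P); lra.
Qed.

Lemma hex_ok (dd s U V x y : R) : 0 < s -> s * s = dd ->
  Shex ((dd + 1) / 4) ((dd + 1) / 2) ((dd - 1) / 2) U V ->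
  x = U + V / 2 -> y = V * s / 2 ->
  HexI dd s x y /\ ~ HexI dd s (x + - 1) (y + - 0) /\
  ~ HexI dd s (x + - (1/2)) (y + - (s / 2)) /\ ~ HexI dd s (x + - (1/2)) (y + - - (s / 2)).
Proof.
  intros Hs Hd [S1 [S2 S3]] Hx Hy.
  assert (E1 : forall x y, y + x / s = (y * s + x) / s) by (intros; field; lra).
  assert (E2 : forall x y, y - x / s = (y * s - x) / s) by (intros; field; lra).
  assert (K : (dd + 1) / (4 * s) = ((dd + 1) / 4) / s) by (field; lra).
  unfold HexI. rewrite !E1, !E2, K.
  assert (P1 : y * s + x = U + V * ((dd + 1) / 2)) by (subst; nra).
  assert (P2 : y * s - x = V * ((dd - 1) / 2) - U) by (subst; nra).
  split; [|split; [|split]].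
  - split; [apply Rabs_le; lra|]. rewrite P1, P2. split; apply rabs_div_le; auto; lra.
  - intros [H _]. revert H. unfold Rabs; destruct (Rcase_abs _); lra.
  - intros [_ [H _]]. revert H. apply Rlt_not_le. apply rabs_div_gt; auto.
    right. replace ((y + - (s / 2)) * s + (x + - (1 / 2))) with (y * s + x - (s * s + 1) / 2) by field.
    rewrite P1, Hd. lra.
  - intros [_ [_ H]]. revert H. apply Rlt_not_le. apply rabs_div_gt; auto.
    left. replace ((y + - - (s / 2)) * s - (x + - (1 / 2))) with (y * s - x + (s * s + 1) / 2) by field.
    rewrite P2, Hd. lra.
Qed.


Lemma close_d3 d (Hd3 : d3 d = true) (Hpos : 0 < INR d) (X Y : R) (M K : Z) :
  let s := sqrt (INR d) in
  Shex ((INR d + 1) / 4) ((INR d + 1) / 2) ((INR d - 1) / 2)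
       ((X - 2 * Y / s / 2) - IZR M) (2 * Y / s - IZR K) ->
  exists a, inO d a /\ inI' d (Cminus (X, Y) a).
Proof.
  intros s HS.
  assert (Hs : 0 < s) by (apply sqrt_lt_R0; auto).
  assert (Hss : s * s = INR d) by (apply sqrt_sqrt; lra).
  exists (IZR M + IZR K / 2, IZR K * s / 2). split.
  - unfold inO. exists M, K. rewrite Hd3. reflexivity.
  - destruct (hex_ok (INR d) s ((X - 2 * Y / s / 2) - IZR M) (2 * Y / s - IZR K)
       (X + - (IZR M + IZR K / 2)) (Y + - (IZR K * s / 2)) Hs Hss HS) as [H1 [H2 [H3 H4]]].
    + field. lra.
    + field. lra.
    + unfold inI', inI. rewrite Hd3. simpl. split; [exact H1|].
      intros b Hb. unfold betas in Hb. rewrite Hd3 in Hb. simpl in Hb.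
      destruct Hb as [<-|[<-|[<-|[]]]]; simpl; fold s.
      * exact H2.
      * exact H3.
      * exact H4.
Qed.

Lemma exists_d3 d (Hd3 : d3 d = true) (Hpos : 0 < INR d)
  (HH : forall p r, 0 <= p < 1 -> 0 <= r < 1 ->
     let S := Shex ((INR d + 1) / 4) ((INR d + 1) / 2) ((INR d - 1) / 2) in
     S p r \/ S (p - 1) r \/ S p (r - 1) \/ S (p - 1) (r - 1)) :
  forall zeta : C, exists a, inO d a /\ inI' d (Cminus zeta a).
Proof.
  intros [X Y]. set (s := sqrt (INR d)).
  set (v := 2 * Y / s). set (u := X - v / 2).
  destruct (up_floor u) as [m Hm]. destruct (up_floor v) as [k Hk].
  destruct (HH (u - IZR m) (v - IZR k)) as [C1|[C1|[C1|C1]]]; try lra.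
  - apply (close_d3 d Hd3 Hpos X Y m k). exact C1.
  - apply (close_d3 d Hd3 Hpos X Y (m + 1) k). fold s. rewrite plus_IZR.
    replace (X - 2 * Y / s / 2 - (IZR m + 1)) with (u - IZR m - 1) by (unfold u, v; ring). exact C1.
  - apply (close_d3 d Hd3 Hpos X Y m (k + 1)). fold s. rewrite plus_IZR.
    replace (2 * Y / s - (IZR k + 1)) with (v - IZR k - 1) by (unfold v; ring). exact C1.
  - apply (close_d3 d Hd3 Hpos X Y (m + 1) (k + 1)). fold s. rewrite !plus_IZR.
    replace (X - 2 * Y / s / 2 - (IZR m + 1)) with (u - IZR m - 1) by (unfold u, v; ring).
    replace (2 * Y / s - (IZR k + 1)) with (v - IZR k - 1) by (unfold v; ring). exact C1.
Qed.

Lemma exists_rect d (Hd3 : d3 d = false) (Hpos : 0 < INR d) :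
  forall zeta : C, exists a, inO d a /\ inI' d (Cminus zeta a).
Proof.
  intros [X Y]. set (s := sqrt (INR d)).
  assert (Hs : 0 < s) by (apply sqrt_lt_R0; auto).
  destruct (up_floor (X + 1/2)) as [m Hm]. destruct (up_floor (Y / s + 1/2)) as [k Hk].
  assert (Hy : - (s / 2) <= Y - IZR k * s < s / 2).
  { assert (E : Y - IZR k * s = (Y / s - IZR k) * s) by (field; lra).
    rewrite E. split; nra. }
  exists (IZR m, IZR k * s). split.
  - unfold inO. exists m, k. rewrite Hd3. reflexivity.
  - unfold inI', inI. rewrite Hd3. simpl. fold s. split.
    + split; apply Rabs_le; lra.
    + intros b Hb. unfold betas in Hb. rewrite Hd3 in Hb. simpl in Hb.
      destruct Hb as [<-|[<-|[]]]; simpl; fold s.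
      * intros [H _]. revert H. unfold Rabs; destruct (Rcase_abs _); lra.
      * intros [_ H]. revert H. unfold Rabs; destruct (Rcase_abs _); lra.
Qed.

Definition dok (d : nat) : Prop := d = 1%nat \/ d = 2%nat \/ d = 3%nat \/ d = 7%nat \/ d = 11%nat.

Lemma floor_exists d : dok d -> forall zeta : C, exists a, inO d a /\ inI' d (Cminus zeta a).
Proof.
  intros hd.
  destruct hd as [ -> | [ -> | [ -> | [ -> | -> ]]]].
  - apply exists_rect; [reflexivity| simpl; lra].
  - apply exists_rect; [reflexivity| simpl; lra].
  - apply exists_d3; [reflexivity| simpl; lra|].
    intros p r Hp Hr S. unfold S. replace (INR 3) with 3 by (simpl; lra).
    replace ((3 + 1) / 4) with 1 by lra. replace ((3 + 1) / 2) with 2 by lra.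
    replace ((3 - 1) / 2) with 1 by lra. apply hex3; auto.
  - apply exists_d3; [reflexivity| simpl; lra|].
    intros p r Hp Hr S. unfold S. replace (INR 7) with 7 by (simpl; lra).
    replace ((7 + 1) / 4) with 2 by lra. replace ((7 + 1) / 2) with 4 by lra.
    replace ((7 - 1) / 2) with 3 by lra. apply hex7; auto.
  - apply exists_d3; [reflexivity| simpl; lra|].
    intros p r Hp Hr S. unfold S. replace (INR 11) with 11 by (simpl; lra).
    replace ((11 + 1) / 4) with 3 by lra. replace ((11 + 1) / 2) with 6 by lra.
    replace ((11 - 1) / 2) with 5 by lra. apply hex11; auto.
Qed.


Lemma hex_bound dd s x y : 0 < s -> s * s = dd -> HexI dd s x y ->
  Rabs x <= 1/2 /\ Rabs (y * s) + Rabs x <= (dd + 1) / 4.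
Proof.
  intros Hs Hd [H1 [H2 H3]]. split; auto.
  assert (E1 : y + x / s = (y * s + x) / s) by (field; lra).
  assert (E2 : y - x / s = (y * s - x) / s) by (field; lra).
  assert (K : (dd + 1) / (4 * s) = ((dd + 1) / 4) / s) by (field; lra).
  rewrite E1, K in H2. rewrite E2, K in H3.
  assert (G : forall P, Rabs (P / s) <= ((dd + 1) / 4) / s -> Rabs P <= (dd + 1) / 4).
  { intros P HP. unfold Rdiv in HP. rewrite Rabs_mult, (Rabs_pos_eq (/ s)) in HP
      by (left; apply Rinv_0_lt_compat; auto).
    apply Rmult_le_reg_r with (/ s); [apply Rinv_0_lt_compat; auto|]. lra. }
  apply G in H2. apply G in H3. revert H2 H3.
  unfold Rabs; destruct (Rcase_abs (y * s + x)); destruct (Rcase_abs (y * s - x));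
    destruct (Rcase_abs (y * s)); destruct (Rcase_abs x); lra.
Qed.

Lemma inI_sq d w : dok d -> inI d w -> fst w ^ 2 + snd w ^ 2 <= 9/10.
Proof.
  intros hd H. destruct w as [x y]. cbn [fst snd].
  unfold inI in H. simpl in H.
  destruct hd as [ -> | [ -> | [ -> | [ -> | -> ]]]]; simpl in H.
    rewrite sqrt_1 in H. destruct H as [H1 H2].
    revert H1 H2. unfold Rabs; destruct (Rcase_abs x); destruct (Rcase_abs y); intros; nra.
  - destruct H as [H1 H2]. assert (Hs : sqrt 2 * sqrt 2 = 2) by (apply sqrt_sqrt; lra).
    replace (1 + 1) with 2 in H2 by lra.
    pose proof (sqrt_lt_R0 2 ltac:(lra)).
    revert H1 H2. unfold Rabs; destruct (Rcase_abs x); destruct (Rcase_abs y); intros; nra.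
  - set (dd := 1 + 1 + 1) in H. assert (Ed : dd = 3) by (unfold dd; lra).
    assert (Hs0 : 0 < sqrt dd) by (apply sqrt_lt_R0; lra).
    destruct (hex_bound dd (sqrt dd) x y Hs0 (sqrt_sqrt dd ltac:(lra)) H) as [B1 B2].
    rewrite Rabs_mult, (Rabs_pos_eq (sqrt dd)) in B2 by lra.
    assert (Y2 : y ^ 2 * dd = (Rabs y * sqrt dd) ^ 2).
    { rewrite <- (sqrt_sqrt dd) at 1 by lra. rewrite <- (pow2_abs y). ring. }
    assert (X2 : x ^ 2 = Rabs x ^ 2) by (rewrite pow2_abs; reflexivity).
    rewrite Ed in *. pose proof (Rabs_pos x). pose proof (Rabs_pos y).
    assert (0 <= Rabs y * sqrt 3) by (apply Rmult_le_pos; lra).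
    nra.
  - set (dd := 1 + 1 + 1 + 1 + 1 + 1 + 1) in H. assert (Ed : dd = 7) by (unfold dd; lra).
    assert (Hs0 : 0 < sqrt dd) by (apply sqrt_lt_R0; lra).
    destruct (hex_bound dd (sqrt dd) x y Hs0 (sqrt_sqrt dd ltac:(lra)) H) as [B1 B2].
    rewrite Rabs_mult, (Rabs_pos_eq (sqrt dd)) in B2 by lra.
    assert (Y2 : y ^ 2 * dd = (Rabs y * sqrt dd) ^ 2).
    { rewrite <- (sqrt_sqrt dd) at 1 by lra. rewrite <- (pow2_abs y). ring. }
    assert (X2 : x ^ 2 = Rabs x ^ 2) by (rewrite pow2_abs; reflexivity).
    rewrite Ed in *. pose proof (Rabs_pos x). pose proof (Rabs_pos y).
    assert (0 <= Rabs y * sqrt 7) by (apply Rmult_le_pos; lra).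
    nra.
  - set (dd := 1 + 1 + 1 + 1 + 1 + 1 + 1 + 1 + 1 + 1 + 1) in H. assert (Ed : dd = 11) by (unfold dd; lra).
    assert (Hs0 : 0 < sqrt dd) by (apply sqrt_lt_R0; lra).
    destruct (hex_bound dd (sqrt dd) x y Hs0 (sqrt_sqrt dd ltac:(lra)) H) as [B1 B2].
    rewrite Rabs_mult, (Rabs_pos_eq (sqrt dd)) in B2 by lra.
    assert (Y2 : y ^ 2 * dd = (Rabs y * sqrt dd) ^ 2).
    { rewrite <- (sqrt_sqrt dd) at 1 by lra. rewrite <- (pow2_abs y). ring. }
    assert (X2 : x ^ 2 = Rabs x ^ 2) by (rewrite pow2_abs; reflexivity).
    rewrite Ed in *. pose proof (Rabs_pos x). pose proof (Rabs_pos y).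
    assert (0 <= Rabs y * sqrt 11) by (apply Rmult_le_pos; lra).
    nra.
Qed.


Lemma inI_bound d w : dok d -> inI d w -> Cmod w <= 19/20.
Proof.
  intros hd H. pose proof (inI_sq d w hd H) as B. unfold Cmod.
  rewrite <- (sqrt_pow2 (19/20)) by lra. apply sqrt_le_1_alt. lra.
Qed.

Lemma floor_spec d zeta : dok d -> inO d (floorO d zeta) /\ inI' d (Cminus zeta (floorO d zeta)).
Proof.
  intros hd. unfold floorO.
  apply (epsilon_spec (inhabits (RtoC 0)) (fun a => inO d a /\ inI' d (Cminus zeta a))).
  apply floor_exists; auto.
Qed.

Lemma Tmap_nz d z : z <> RtoC 0 -> Tmap d z = Cminus (Cinv z) (floorO d (Cinv z)).
Proof.
  intros H. unfold Tmap. destruct (ClassicalDescription.excluded_middle_informative _) as [e|e]; [contradiction|reflexivity].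
Qed.

Lemma chain_of_seq (al : list C) : forall f : nat -> C,
  (forall j, (j < length al)%nat -> f j <> 0%C /\ Cmod (f j) <= 19/20 /\
      f (S j) = (Cinv (f j) - nth j al 0%C)%C) ->
  chain al (f 0%nat) (f (length al)).
Proof.
  induction al as [|a al IH]; simpl; intros f H.
  - reflexivity.
  - destruct (H 0%nat ltac:(lia)) as [H1 [H2 H3]]. split; [auto|split; [auto|]].
    rewrite <- H3. apply (IH (fun j => f (S j))).
    intros j Hj. apply (H (S j)). lia.
Qed.

Theorem main_thm (d : nat) (hd : dok d) :
  exists M : R, 0 < M /\
    forall (al : list C) (v z : C),
      (1 <= length al)%nat ->
      admissible d al ->
      fst v ^ 2 + snd v ^ 2 = 1 ->
      inTnOalpha d al z ->
      ex_derive (along (Jalpha al) z v) 0 /\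
      Rabs (Derive (along (Jalpha al) z v) 0) <= M * Rabs (Jalpha al z).
Proof.
  exists (4 * 19). split; [lra|].
  intros al v z _ _ Hv [w [[HwI Hw] Hz]].
  assert (Hch : chain al w z).
  { rewrite <- Hz. change w with (Nat.iter 0 (Tmap d) w) at 1.
    apply (chain_of_seq al (fun j => Nat.iter j (Tmap d) w)).
    intros j Hj. destruct (Hw (S j) ltac:(lia)) as [N Dg].
    replace (S j - 1)%nat with j in N, Dg by lia.
    split; [exact N|]. split.
    - destruct j as [|j].
      + simpl. apply (inI_bound d); auto.
      + apply (inI_bound d); auto. simpl.
        destruct (Hw (S j) ltac:(lia)) as [N' _].
        replace (S j - 1)%nat with j in N' by lia.
        rewrite (Tmap_nz d _ N'). apply (floor_spec d _ hd).
    - simpl. rewrite (Tmap_nz d _ N). unfold digit in Dg.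
      replace (S j - 1)%nat with j in Dg by lia. rewrite Dg. reflexivity. }
  destruct (chain_good _ _ _ Hch) as [G _].
  apply along_main; auto; [lra|].
  exact (chain_bound _ _ _ Hch).
Qed.

Theorem proposition2p4 (d : nat)
  (hd : d = 1%nat \/ d = 2%nat \/ d = 3%nat \/ d = 7%nat \/ d = 11%nat) :
  exists M : R, 0 < M /\
    forall (al : list C) (v z : C),
      (1 <= length al)%nat ->
      admissible d al ->
      fst v ^ 2 + snd v ^ 2 = 1 ->
      inTnOalpha d al z ->
      ex_derive (along (Jalpha al) z v) 0 /\
      Rabs (Derive (along (Jalpha al) z v) 0) <= M * Rabs (Jalpha al z).
Proof.
  exact (main_thm d hd).
Qed.
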